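(* For every integer $k\ge7$, $c_{n_k^*}\ge\frac14+\frac{1}{8(n_k^* )^{2/3}-4}$, where $$n_k^*=2k+2\sum_{i=1}^{\lfloor\sqrt{k/2}\rfloor}\left(2\left\lfloor\frac{2k-2i^2-i}{2}\right\rfloor+i\right).$$
   Context: A weighted digraph $D=(V,A,w)$ is a digraph without loops or parallel arcs (opposite arcs allowed) with weights $w:A\to\mathbb{R}_{\ge0}$; $w(D)$ is the total arc weight. For a partition $(X,Y)$ of $V$, $w(X,Y)$ is the total weight of arcs from $X$ to $Y$, and $\mathrm{mac}(D)=\max_{(X,Y)}w(X,Y)$. For an integer $\nu\ge1$, $c_\nu$ is the supremum of reals $c\ge0$ such that every acyclic weighted digraph $D$ whose longest directed path has exactly $\nu$ vertices satisfies $\mathrm{mac}(D)\ge c\cdot w(D)$. *)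

(* Defs.v *)
From HB Require Import structures.
From mathcomp Require Import all_boot all_order all_algebra.
From mathcomp Require Import boolp classical_sets reals constructive_ereal ereal exp.
Set Implicit Arguments. Unset Strict Implicit. Unset Printing Implicit Defensive.
Import Order.TTheory GRing.Theory Num.Theory.

(* A weighted digraph on the vertex set 'I_n: an arc relation [A] (no loops
   required separately; parallel arcs are impossible by construction; opposite
   arcs allowed) and a weight function [w], only relevant on arcs. *)
Local Open Scope ring_scope.

Definition loopless (n : nat) (A : rel 'I_n) : Prop := forall x, ~~ A x x.

Definition nonneg_weights (R : realType) (n : nat) (A : rel 'I_n)
  (w : 'I_n -> 'I_n -> R) : Prop := forall x y, A x y -> 0 <= w x y.

Definition total_weight (R : realType) (n : nat) (A : rel 'I_n)
  (w : 'I_n -> 'I_n -> R) : R :=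
  \sum_(x : 'I_n) \sum_(y : 'I_n | A x y) w x y.

Definition cut_weight (R : realType) (n : nat) (A : rel 'I_n)
  (w : 'I_n -> 'I_n -> R) (X : {set 'I_n}) : R :=
  \sum_(x in X) \sum_(y in ~: X | A x y) w x y.

Definition mac (R : realType) (n : nat) (A : rel 'I_n)
  (w : 'I_n -> 'I_n -> R) : R :=
  \big[Num.max/0]_(X : {set 'I_n}) cut_weight A w X.

(* directed path x :: s: consecutive arcs and pairwise distinct vertices;
   its number of vertices is (size s).+1 *)
Definition dipath (n : nat) (A : rel 'I_n) (x : 'I_n) (s : seq 'I_n) : bool :=
  path A x s && uniq (x :: s).

Definition acyclic (n : nat) (A : rel 'I_n) : Prop :=
  forall (x : 'I_n) (s : seq 'I_n), path A x s -> last x s = x -> s = [::].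

Definition longest_path_vertices (n : nat) (A : rel 'I_n) (nu : nat) : Prop :=
  (exists x s, dipath A x s /\ (size s).+1 = nu) /\
  (forall x s, dipath A x s -> ((size s).+1 <= nu)%N).

Definition c_nu (R : realType) (nu : nat) : \bar R :=
  ereal_sup [set (c%:E : \bar R) | c in
    [set c : R | 0 <= c /\
      forall (n : nat) (A : rel 'I_n) (w : 'I_n -> 'I_n -> R),
        loopless A -> nonneg_weights A w -> acyclic A ->
        longest_path_vertices A nu ->
        c * total_weight A w <= mac A w]].

(* n_k^* ; note floor(sqrt(k/2)) = Nat.sqrt (k %/ 2) *)
Definition n_star (k : nat) : nat :=
  (2 * k + 2 * \sum_(1 <= i < (Nat.sqrt (k %/ 2)).+1)
                 (2 * ((2 * k - 2 * i ^ 2 - i) %/ 2) + i))%N.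

(* Main.v *)
Require Import Defs.
From HB Require Import structures.
From mathcomp Require Import all_boot all_order all_algebra.
From mathcomp Require Import boolp classical_sets reals constructive_ereal ereal exp.
From mathcomp Require Import ring lra zify.
From Stdlib Require Import PeanoNat.
Set Implicit Arguments. Unset Strict Implicit. Unset Printing Implicit Defensive.
Import Order.TTheory GRing.Theory Num.Theory.

Section RealPart.
Local Open Scope ring_scope.
Lemma case2 (R : realFieldType) (x : R) : 7 <= x -> x <= 33 -> x ^+ 6 <= 64 * (x-1)^+2 * (x - 2) ^+ 3.
Proof.
move=> h1 h2. set u := x - 2.
have hu : 5 <= u by rewrite /u; lra.
have hu' : u <= 31 by rewrite /u; lra.
have -> : x = u + 2 by rewrite /u; ring.
have -> : u + 2 - 1 = u + 1 by ring.
have u2 : 25 <= u ^+ 2 by nra.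
have u3 : 125 <= u ^+ 3 by rewrite exprS; nra.
have u4 : 0 <= u ^+ 4 by rewrite exprS; nra.
have u5 : 0 <= u ^+ 5 by rewrite exprS; nra.
have e5 : u ^+ 5 * (52 - u) >= 21 * u ^+ 5 by nra.
have e6 : u ^+ 6 = u ^+ 5 * u by rewrite exprS mulrC.
have e4 : u ^+ 4 = u ^+ 3 * u by rewrite exprS mulrC.
have e5' : u ^+ 5 = u ^+ 4 * u by rewrite exprS mulrC.
have e3 : u ^+ 3 = u ^+ 2 * u by rewrite exprS mulrC.
have e2 : u ^+ 2 = u * u by rewrite expr2.
have : (u + 2) ^+ 6 = u^+6 + 12 * u^+5 + 60 * u^+4 + 160 * u^+3 + 240 * u^+2 + 192 * u + 64 by ring.
have : 64 * (u + 1) ^+ 2 * u ^+ 3 = 64 * u^+5 + 128 * u^+4 + 64 * u^+3 by ring.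
move=> -> ->.
nra.
Qed.

Lemma case1 (R : realFieldType) (x y : R) : 16/5 <= x -> x <= 7 -> 32 <= y -> x ^+ 6 <= y ^+ 2 * (x - 2) ^+ 3.
Proof.
move=> h1 h2 hy.
have q : x ^+ 2 <= 10 * (x - 2) by nra.
have : (x ^+ 2) ^+ 3 <= (10 * (x-2)) ^+ 3 by apply: lerXn2r; rewrite ?nnegrE; nra.
rewrite -exprM exprMn => H.
have hx2 : 0 <= (x - 2) ^+ 3 by apply: exprn_ge0; lra.
have hy2 : 1024 <= y ^+ 2 by nra.
apply: (le_trans H).
have -> : (10:R) ^+ 3 = 1000 by rewrite !exprS expr0; lra.
nra.
Qed.

Lemma xy_ineq (R : realFieldType) (x y : R) : 32 <= y -> y <= 256 -> y <= 10 * x -> 8 * x - 8 <= y ->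
  x ^+ 6 <= y ^+ 2 * (x - 2) ^+ 3.
Proof.
move=> h1 h2 h3 h4.
have [hx|hx] := lerP x 7.
  by apply: case1 => //; lra.
have hc := case2 (ltW hx) _. have {hc}hc := hc ltac:(lra).
apply: (le_trans hc).
have h0 : 0 <= (x-2)^+3 by apply: exprn_ge0; lra.
have : 64 * (x - 1) ^+ 2 <= y ^+ 2.
  have -> : 64 * (x - 1) ^+ 2 = (8 * (x - 1)) ^+ 2 by ring.
  apply: lerXn2r; rewrite ?nnegrE; lra.
move=> H; by apply: ler_wpM2r.
Qed.

Lemma main_ineq (R : realFieldType) (t h n : R) : 1 <= t -> 32 * t^+3 <= n -> n <= 256 * t^+3 ->
  (8*t+2)*(h-1) <= n -> n <= (8*t+2)*h -> h ^+ 6 <= n ^+ 2 * (h - 2 * t^+2) ^+ 3.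
Proof.
move=> ht h1 h2 h3 h4.
have t0 : 0 < t by lra.
have t2 : 0 < t ^+ 2 by apply: exprn_gt0.
have t3 : 0 < t ^+ 3 by apply: exprn_gt0.
set x := h / t ^+ 2. set y := n / t ^+ 3.
have hx : h = x * t ^+ 2 by rewrite /x mulfVK // gt_eqF.
have hy : n = y * t ^+ 3 by rewrite /y mulfVK // gt_eqF.
have e3 : t ^+ 3 = t * t ^+ 2 by rewrite exprS.
have tt : t <= t ^+ 2 by rewrite expr2; nra.
have tt3 : t ^+ 2 <= t ^+ 3 by rewrite e3; nra.
have y1 : 32 <= y by rewrite hy in h1; rewrite -(ler_pM2r t3); lra.
have y2 : y <= 256 by rewrite hy in h2; rewrite -(ler_pM2r t3); lra.
have y3 : y <= 10 * x.
  rewrite hy hx e3 in h4; rewrite -(ler_pM2r t3) e3.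
  have hx0 : 0 <= x by nra.
  nra.
have y4 : 8 * x - 8 <= y.
  rewrite hy hx e3 in h3; rewrite -(ler_pM2r t3) e3.
  have hx0 : 0 <= x by nra.
  nra.
have := xy_ineq y1 y2 y3 y4.
rewrite hx hy.
have -> : (x * t ^+ 2) ^+ 6 = x ^+ 6 * (t ^+ 2) ^+ 6 by rewrite exprMn.
have -> : (y * t ^+ 3) ^+ 2 * (x * t ^+ 2 - 2 * t ^+ 2) ^+ 3 = (y ^+ 2 * (x - 2) ^+ 3) * (t ^+ 2) ^+ 6 by ring.
move=> H; apply: ler_wpM2r => //; apply: exprn_ge0; lra.
Qed.

End RealPart.

Lemma sum_bool (T : finType) (P : pred T) : \sum_(x : T) (P x : nat) = #|P|.
Proof. by rewrite -sum1_card [RHS]big_mkcond; apply: eq_bigr => x _; rewrite unfold_in; case: (P x). Qed.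

Lemma binaux a b X : (0 < a)%N -> (0 < b)%N -> X + 'C(a.-1, b) = 'C(a, b) -> X = 'C(a.-1, b.-1).
Proof. case: a => // a _; case: b => // b _ /=; rewrite binS addnC; lia. Qed.

Section Count.
Variables (L s : nat).
Local Notation SS := {set 'I_L}.

Lemma K0 : \sum_(V : SS) (#|V| == s : nat) = 'C(L, s).
Proof.
rewrite sum_bool -[X in 'C(X, _)](card_ord L) -card_draws; apply: eq_card => V; by rewrite inE.
Qed.

Lemma K1 (r : 'I_L) : \sum_(V : SS) ((#|V| == s) && (r \notin V) : nat) = 'C(L.-1, s).
Proof.
have -> : L.-1 = #|[set~ r]| by rewrite cardsC1 card_ord.
rewrite sum_bool -cards_draws; apply: eq_card => V.
rewrite !inE andbC; congr (_ && _).
by rewrite finset.subsetC finset.sub1set inE.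
Qed.

Lemma K2 (r r' : 'I_L) : r != r' ->
  \sum_(V : SS) ((#|V| == s) && (r \notin V) && (r' \notin V) : nat) = 'C(L.-2, s).
Proof.
move=> rr.
have cB : #|~: [set r; r']| = L.-2.
  have := cardsC [set r; r']; rewrite cards2 rr card_ord => E.
  by rewrite -[X in X.-2]E.
rewrite sum_bool -cB -cards_draws; apply: eq_card => V.
rewrite !inE -topredE /= finset.subsetC finset.subUset !finset.sub1set !inE.
by case: (#|V| == s); case: (r \in V); case: (r' \in V).
Qed.

Lemma K1' (r : 'I_L) : (0 < L)%N -> (0 < s)%N ->
  \sum_(V : SS) ((#|V| == s) && (r \in V) : nat) = 'C(L.-1, s.-1).
Proof.
move=> L0 s0.
have E := K0.
have S : \sum_(V : SS) (#|V| == s : nat) = \sum_(V : SS) ((#|V| == s) && (r \in V) : nat) + \sum_(V : SS) ((#|V| == s) && (r \notin V) : nat).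
  rewrite -big_split; apply: eq_bigr => V _; by case: (r \in V); case: (#|V| == s).
rewrite S K1 in E; exact: binaux E.
Qed.

Lemma K3 (r r' : 'I_L) : r != r' -> (1 < L)%N -> (0 < s)%N ->
  \sum_(V : SS) ((#|V| == s) && (r \in V) && (r' \notin V) : nat) = 'C(L.-2, s.-1).
Proof.
move=> rr L1 s0.
have E := K1 r'.
have S : \sum_(V : SS) ((#|V| == s) && (r' \notin V) : nat) = \sum_(V : SS) ((#|V| == s) && (r \in V) && (r' \notin V) : nat) + \sum_(V : SS) ((#|V| == s) && (r \notin V) && (r' \notin V) : nat).
  rewrite -big_split; apply: eq_bigr => V _; by case: (r \in V); case: (#|V| == s); case: (r' \in V).
rewrite S K2 // in E; apply: binaux E => //; by case: L L1 {r r' rr S} => // [[]].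
Qed.
End Count.

Section Fam.
Variables (L s mu : nat).
Local Notation B := mu.+1.
Definition FT := {ffun 'I_B -> {set 'I_L}}.
Definition pw (F : FT) : nat := \prod_(i : 'I_B) (#|F i| == s : nat).
Definition memb (tau : 'I_mu) (F : FT) (b : 'I_B) (r : 'I_L) : bool := (r \in F b) == (b <= tau)%N.

Lemma sum_prod (G : 'I_B -> {set 'I_L} -> nat) :
  \sum_(F : FT) \prod_i G i (F i) = \prod_i \sum_(V : {set 'I_L}) G i V.
Proof. by rewrite bigA_distr_bigA. Qed.

Lemma prod_if (b : 'I_B) (x : 'I_B -> nat) : \prod_i (if i == b then x i else 1) = x b.
Proof. by rewrite -big_mkcond big_pred1_eq. Qed.

Lemma prod_split2 (X : 'I_B -> nat) (b b' : 'I_B) : b != b' ->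
  \prod_i X i = X b * X b' * \prod_(i | (i != b) && (i != b')) X i.
Proof.
move=> bb; rewrite (bigD1 b) //= (bigD1 b') /=; last by rewrite eq_sym.
rewrite mulnA; congr (_ * _); apply: eq_bigl => i; by rewrite andbC.
Qed.

Definition Q (b b' : 'I_B) := \prod_(i : 'I_B | (i != b) && (i != b')) 'C(L, s).

Lemma cnt_gen (b b' : 'I_B) (g1 g2 : {set 'I_L} -> nat) : b != b' ->
  \sum_(F : FT) pw F * (g1 (F b) * g2 (F b')) =
  (\sum_(V : {set 'I_L}) (#|V| == s : nat) * g1 V) * (\sum_(V : {set 'I_L}) (#|V| == s : nat) * g2 V) * Q b b'.
Proof.
move=> bb.
pose G (i : 'I_B) (V : {set 'I_L}) := (#|V| == s : nat) * ((if i == b then g1 V else 1) * (if i == b' then g2 V else 1)).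
have -> : \sum_(F : FT) pw F * (g1 (F b) * g2 (F b')) = \sum_(F : FT) \prod_i G i (F i).
  apply: eq_bigr => F _; rewrite /G /pw big_split /= big_split /=.
  by rewrite (prod_if b (fun i => g1 (F i))) (prod_if b' (fun i => g2 (F i))).
rewrite sum_prod (prod_split2 _ bb) /G eqxx (negbTE bb) eq_sym (negbTE bb) eqxx.
congr (_ * _ * _).
- by apply: eq_bigr => V _; rewrite muln1.
- by apply: eq_bigr => V _; rewrite mul1n.
- apply: eq_bigr => i /andP[/negbTE -> /negbTE ->]; rewrite -(K0 L s).
  by apply: eq_bigr => V _; rewrite !muln1.
Qed.

Definition Q1 (b : 'I_B) := \prod_(i : 'I_B | i != b) 'C(L, s).

Lemma cnt_same (b : 'I_B) (g : {set 'I_L} -> nat) :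
  \sum_(F : FT) pw F * g (F b) = (\sum_(V : {set 'I_L}) (#|V| == s : nat) * g V) * Q1 b.
Proof.
pose G (i : 'I_B) (V : {set 'I_L}) := (#|V| == s : nat) * (if i == b then g V else 1).
have -> : \sum_(F : FT) pw F * g (F b) = \sum_(F : FT) \prod_i G i (F i).
  apply: eq_bigr => F _; rewrite /G /pw big_split /=.
  by rewrite (prod_if b (fun i => g (F i))).
rewrite sum_prod (bigD1 b) //= /G eqxx; congr (_ * _).
apply: eq_bigr => i /negbTE ->; rewrite -(K0 L s).
by apply: eq_bigr => V _; rewrite !muln1.
Qed.
End Fam.

Section AvgS.
Local Open Scope ring_scope.
Section Avg.
Variables (R : realType) (n : nat) (A : rel 'I_n) (w : 'I_n -> 'I_n -> R).

Lemma cut_le_mac X : cut_weight A w X <= mac A w.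
Proof. rewrite /mac. exact: (le_bigmax _ (fun X => cut_weight A w X) X). Qed.

Lemma cut_eq X : cut_weight A w X =
  \sum_x \sum_(y | A x y) ((x \in X) && (y \notin X))%:R * w x y.
Proof.
rewrite /cut_weight [RHS](bigID (fun x => x \in X)) /= [X in _ + X]big1 ?addr0; last first.
  by move=> x /negbTE xX; apply: big1 => y _; rewrite xX mul0r.
apply: eq_bigr => x xX; rewrite xX /=.
rewrite [RHS](bigID (fun y => y \in X)) /= [X in X + _]big1 ?add0r; last first.
  by move=> y /andP[_ ->]; rewrite mul0r.
rewrite [RHS]big_mkcond [LHS]big_mkcond; apply: eq_bigr => y _.
rewrite !inE; case: (y \in X); rewrite /= ?andbF ?mul1r //. all: try by case: (A x y).
Qed.

Lemma avg (O : finType) (p : O -> R) (X : O -> {set 'I_n}) (c : R) :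
  nonneg_weights A w -> (forall o, 0 <= p o) -> 0 < \sum_o p o ->
  (forall x y, A x y -> c * \sum_o p o <= \sum_o p o * ((x \in X o) && (y \notin X o))%:R) ->
  c * total_weight A w <= mac A w.
Proof.
move=> hw hp hP hc.
have H1 : \sum_o p o * cut_weight A w (X o) <= (\sum_o p o) * mac A w.
  rewrite mulr_suml; apply: ler_sum => o _; apply: ler_wpM2l => //; exact: cut_le_mac.
have E : \sum_o p o * cut_weight A w (X o) =
    \sum_x \sum_(y | A x y) w x y * \sum_o p o * ((x \in X o) && (y \notin X o))%:R.
  under eq_bigr => o _ do rewrite cut_eq mulr_sumr.
  rewrite exchange_big; apply eq_bigr => x _.
  under eq_bigr => o _ do rewrite mulr_sumr.
  rewrite (exchange_big_dep (fun y => A x y)) //=; apply eq_bigr => y Axy.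
  rewrite [LHS]big_mkcond /= mulr_sumr; apply: eq_bigr => o _; rewrite Axy; ring.
have H2 : c * (\sum_o p o) * total_weight A w <= \sum_o p o * cut_weight A w (X o).
  rewrite E /total_weight mulr_sumr; apply: ler_sum => x _.
  rewrite mulr_sumr; apply: ler_sum => y Axy.
  rewrite mulrC; apply: ler_wpM2l; first exact: hw.
  exact: hc.
rewrite -(ler_pM2l hP) mulrA [_ * c]mulrC.
exact: le_trans H2 H1.
Qed.
End Avg.

End AvgS.

Section Layer.
Variables (n : nat) (A : rel 'I_n).
Hypothesis acy : acyclic A.

Lemma last_take_nth (x : 'I_n) s i : i < size s -> last x (take i.+1 s) = nth x s i.
Proof.
move=> hi; have hs : size (take i.+1 s) = i.+1 by rewrite size_takel.
by rewrite -nth_last hs /= nth_take.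
Qed.

Lemma path_uniq x s : path A x s -> uniq (x :: s).
Proof.
elim: s x => [//|y s IH] x /= /andP[Axy pys].
have := IH y pys => /= /andP[ys us]; rewrite ys us; apply/andP; split=> //.
apply/negP => xin.
have hi : index x (y :: s) < size (y :: s) by rewrite index_mem.
set t := take (index x (y :: s)).+1 (y :: s).
have pt : path A x t by apply: take_path; rewrite /= Axy pys.
have lt : last x t = x by rewrite /t last_take_nth // nth_index.
by have := acy pt lt; rewrite /t.
Qed.

Lemma uniq_size (x : 'I_n) s : uniq (x :: s) -> (size s).+1 <= n.
Proof. move/card_uniqP => /= <-. by have := max_card (mem (x :: s)); rewrite card_ord. Qed.

Definition reach (v : 'I_n) (m : nat) : bool :=
  [exists x : 'I_n, exists s : m.-tuple 'I_n, path A x s && (last x s == v)].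

Lemma reach0 v : reach v 0.
Proof. apply/existsP; exists v; apply/existsP; exists [tuple]; by rewrite /= eqxx. Qed.

Lemma reach_lt v m : reach v m -> m < n.
Proof.
case/existsP=> x /existsP[s /andP[ps _]].
by have := uniq_size (path_uniq ps); rewrite size_tuple.
Qed.

Definition lev (v : 'I_n) : nat := \max_(m < n | reach v m) m.

Lemma lev_reach v : reach v (lev v).
Proof.
have n0 : 0 < n by case: v => m; case: (n) => //.
rewrite /lev (bigop.bigmax_eq_arg (Ordinal n0)) /=; last exact: reach0.
by case: arg_maxnP => //=; exact: reach0.
Qed.

Lemma lev_arc u v : A u v -> lev u < lev v.
Proof.
move=> Auv.
have := lev_reach u => /existsP[x /existsP[s /andP[ps /eqP ls]]].
have r : reach v (lev u).+1.
  apply/existsP; exists x; apply/existsP; exists [tuple of rcons s v].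
  by rewrite /= rcons_path ps ls Auv last_rcons eqxx.
have hl := reach_lt r.
exact: (leq_bigmax_cond (Ordinal hl) r).
Qed.

Lemma lev_bound nu v : longest_path_vertices A nu -> lev v < nu.
Proof.
move=> [_ Hmax].
have := lev_reach v => /existsP[x /existsP[s /andP[ps _]]].
have := Hmax x s; rewrite /dipath ps path_uniq //= size_tuple; exact.
Qed.
End Layer.

Lemma rE (Lv L' a1 a0 Qv k0 : nat) : (Lv*Lv*(Lv*L'*((a1*a1 + k0*(a1*a0))*Qv)) = Lv*L'*((Lv*a1)*(Lv*a1) + k0*((Lv*a1)*(Lv*a0)))*Qv)%N.
Proof. ring. Qed.
Lemma rE2 (Lv L' sv c Qv k0 d : nat) : (Lv*L'*(sv*c*(sv*c) + k0*(sv*c*(d*c)))*Qv = (Lv*L'*(sv*sv + k0*(sv*d)))*(c*c*Qv))%N.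
Proof. ring. Qed.
Lemma rE3 (Lv sv d k0 c Qv : nat) : (Lv*Lv*(sv*d*(k0*(c*c*Qv))) = (Lv*Lv*(sv*d*k0))*(c*c*Qv))%N.
Proof. ring. Qed.
Lemma rS1 (sv d k0 c Qv : nat) : (sv*d*(k0*(c*Qv)) = k0*Qv*(sv*d*c))%N.
Proof. ring. Qed.
Lemma rS2 (k0 Qv Lv L' D : nat) : (k0*Qv*(Lv*(L'*D)) = Lv*L'*(k0*(D*Qv)))%N.
Proof. ring. Qed.
Lemma pineq (h t : nat) : (1 <= t)%N -> (t <= h)%N ->
  (2*h*(2*h)*((h+t)*(2*h - (h+t))*(4*t)) <= 2*h*(2*h).-1*((h+t)*(h+t) + (4*t).-1*((h+t)*(2*h-(h+t)))))%N.
Proof.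
move=> t1 th.
have e1 : (2*h - (h+t) = h - t)%N by lia.
have e2 : ((2*h).-1 = 2*h - 1)%N by lia.
have e3 : ((4*t).-1 = 4*t - 1)%N by lia.
rewrite e1 e2 e3.
have core : (2*h*(4*t) * (h - t) <= (2*h - 1)*(h + t + (4*t-1)*(h-t)))%N by nia.
have E1 : (2*h*(2*h)*((h+t)*(h-t)*(4*t)) = (2*h)*((h+t)*(2*h*(4*t) * (h - t))))%N by ring.
have E2 : (2*h*(2*h-1)*((h+t)*(h+t) + (4*t-1)*((h+t)*(h-t))) = (2*h)*((h+t)*((2*h - 1)*(h + t + (4*t-1)*(h-t)))))%N by ring.
rewrite E1 E2 leq_mul2l; apply/orP; right; rewrite leq_mul2l; apply/orP; right; exact: core.
Qed.

Section Key.
Variables (h t : nat).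
Hypotheses (t1 : (1 <= t)%N) (th : (t <= h)%N).
Local Notation L := (2 * h)%N.
Local Notation s := (h + t)%N.
Local Notation mu := (4 * t)%N.
Local Notation A1 := 'C(L.-1, s.-1).
Local Notation A0 := 'C(L.-1, s).
Local Notation C := 'C(L, s).
Local Notation D := 'C(L.-2, s.-1).

Lemma L0 : (0 < L)%N. Proof. lia. Qed.
Lemma L1 : (1 < L)%N. Proof. lia. Qed.
Lemma s0 : (0 < s)%N. Proof. lia. Qed.

Lemma I1 : L * A1 = s * C.
Proof. by rewrite mul_bin_diag prednK //; exact: s0. Qed.
Lemma I2 : L * A0 = (L - s) * C.
Proof. by rewrite mul_bin_down. Qed.
Lemma I3 : L * (L.-1 * D) = s * (L - s) * C.
Proof.
have := mul_bin_down L.-1 s.-1.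
have -> : (L.-1 - s.-1 = L - s)%N by lia.
move=> ->; by rewrite mulnCA I1 mulnA [(L - s) * s]mulnC.
Qed.

Lemma S1e (r : 'I_L) (c : bool) :
  \sum_(V : {set 'I_L}) (#|V| == s : nat) * ((r \in V) == c : nat) = if c then A1 else A0.
Proof.
case: c.
- rewrite -(K1' r L0 s0); apply: eq_bigr => V _; by rewrite mulnb eqb_id.
- rewrite -(K1 s r); apply: eq_bigr => V _; by rewrite mulnb eqbF_neg.
Qed.

Lemma S2e (r : 'I_L) (c : bool) :
  \sum_(V : {set 'I_L}) (#|V| == s : nat) * (~~ ((r \in V) == c) : nat) = if c then A0 else A1.
Proof.
case: c.
- rewrite -(K1 s r); apply: eq_bigr => V _; by rewrite mulnb eqb_id.
- rewrite -(K1' r L0 s0); apply: eq_bigr => V _; by rewrite mulnb eqbF_neg negbK.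
Qed.

Lemma Sde (r r' : 'I_L) (c : bool) : r != r' ->
  \sum_(V : {set 'I_L}) (#|V| == s : nat) * ((((r \in V) == c) && ~~ ((r' \in V) == c)) : nat) = D.
Proof.
move=> rr; case: c.
- rewrite -(K3 rr L1 s0); apply: eq_bigr => V _; by rewrite mulnb !eqb_id andbA.
- rewrite eq_sym in rr; rewrite -(K3 rr L1 s0); apply: eq_bigr => V _.
  rewrite mulnb !eqbF_neg negbK; by case: (r \in V); case: (r' \in V); case: (#|V| == s).
Qed.

Definition cntN (b b' : 'I_mu.+1) (r r' : 'I_L) :=
  \sum_(tau : 'I_mu) \sum_(F : FT L mu) pw s F * (memb tau F b r && ~~ memb tau F b' r').
Definition totN := \sum_(tau : 'I_mu) \sum_(F : FT L mu) pw s F.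

Lemma tot_inner (b : 'I_mu.+1) : \sum_(F : FT L mu) pw s F = C * Q1 L s b.
Proof.
rewrite (eq_bigr (fun F => pw s F * (fun _ : {set 'I_L} => 1%N) (F b))); last by move=> F _; rewrite muln1.
rewrite (cnt_same s b (fun _ => 1%N)); congr (_ * _); rewrite -(K0 L s); apply: eq_bigr => V _; by rewrite muln1.
Qed.

Lemma tot_same (b : 'I_mu.+1) : totN = mu * (C * Q1 L s b).
Proof.
by rewrite /totN (eq_bigr _ (fun tau _ => tot_inner b)) sum_nat_const card_ord.
Qed.

Lemma cnt_sameb (b : 'I_mu.+1) (r r' : 'I_L) : r != r' -> cntN b b r r' = mu * (D * Q1 L s b).
Proof.
move=> rr.
have inner : forall tau : 'I_mu, \sum_(F : FT L mu) pw s F * (memb tau F b r && ~~ memb tau F b r') = D * Q1 L s b.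
  move=> tau.
  rewrite (eq_bigr (fun F => pw s F * (fun V : {set 'I_L} => (((r \in V) == (b <= tau)%N) && ~~ ((r' \in V) == (b <= tau)%N) : nat)) (F b))) //.
  by rewrite (cnt_same s b (fun V : {set 'I_L} => (((r \in V) == (b <= tau)%N) && ~~ ((r' \in V) == (b <= tau)%N) : nat))) (Sde _ rr).
by rewrite /cntN (eq_bigr _ (fun tau _ => inner tau)) sum_nat_const card_ord.
Qed.

Lemma A10 : A0 <= A1.
Proof.
rewrite -(leq_pmul2l L0) I1 I2; apply: leq_mul => //; lia.
Qed.

Lemma tot_cross (b b' : 'I_mu.+1) : b != b' -> totN = mu * (C * C * Q L s b b').
Proof.
move=> bb.
have inner : forall tau : 'I_mu, \sum_(F : FT L mu) pw s F = C * C * Q L s b b'.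
  move=> tau.
  rewrite (eq_bigr (fun F => pw s F * ((fun _ : {set 'I_L} => 1%N) (F b) * (fun _ : {set 'I_L} => 1%N) (F b')))); last by move=> F _; rewrite !muln1.
  rewrite (cnt_gen s (fun _ => 1%N) (fun _ => 1%N) bb).
  have E : \sum_(V : {set 'I_L}) (#|V| == s : nat) * 1 = C by rewrite -(K0 L s); apply: eq_bigr => V _; rewrite muln1.
  by rewrite E.
by rewrite /totN (eq_bigr _ (fun tau _ => inner tau)) sum_nat_const card_ord.
Qed.

Lemma cnt_cross (b b' : 'I_mu.+1) (r r' : 'I_L) : (b < b')%N ->
  (A1 * A1 + mu.-1 * (A1 * A0)) * Q L s b b' <= cntN b b' r r'.
Proof.
move=> lbb.
have bb : b != b' by rewrite neq_ltn lbb.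
pose f (tau : 'I_mu) := ((if (b <= tau)%N then A1 else A0) * (if (b' <= tau)%N then A0 else A1))%N.
have inner : forall tau : 'I_mu, \sum_(F : FT L mu) pw s F * (memb tau F b r && ~~ memb tau F b' r') = f tau * Q L s b b'.
  move=> tau.
  rewrite (eq_bigr (fun F => pw s F * ((fun V : {set 'I_L} => ((r \in V) == (b <= tau)%N : nat)) (F b) * (fun V : {set 'I_L} => (~~ ((r' \in V) == (b' <= tau)%N) : nat)) (F b')))); last by move=> F _; rewrite mulnb.
  by rewrite (cnt_gen s (fun V : {set 'I_L} => ((r \in V) == (b <= tau)%N : nat)) (fun V : {set 'I_L} => (~~ ((r' \in V) == (b' <= tau)%N) : nat)) bb) S1e S2e.
rewrite /cntN (eq_bigr _ (fun tau _ => inner tau)) -big_distrl /= leq_mul2r; apply/orP; right.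
have bmu : (b < mu)%N by have := ltn_ord b'; lia.
pose tau0 : 'I_mu := Ordinal bmu.
rewrite (bigD1 tau0) //=; apply: leq_add.
  by rewrite /f /= leqnn; have -> : (b' <= b)%N = false by lia.
have -> : (mu.-1 * (A1 * A0) = \sum_(tau : 'I_mu | tau != tau0) A1 * A0)%N.
  by rewrite sum_nat_const cardC1 card_ord.
apply: leq_sum => tau _; rewrite /f.
case: (leqP b tau) => hb.
  apply: leq_mul => //; case: ifP => // _; exact: A10.
have -> : (b' <= tau)%N = false by lia.
by rewrite mulnC.
Qed.

Lemma key_nat (b b' : 'I_mu.+1) (r r' : 'I_L) : ((b < b')%N \/ (b = b' /\ r != r')) ->
  s * (L - s) * totN <= L * L.-1 * cntN b b' r r'.
Proof.
case=> [lbb|[<- rr]]; last first.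
  rewrite (tot_same b) (cnt_sameb b rr) rS1 -I3 rS2; exact: leqnn.
have bb : b != b' by rewrite neq_ltn lbb.
rewrite (tot_cross bb).
apply: leq_trans (leq_mul (leqnn _) (cnt_cross r r' lbb)).
have LL : (0 < L * L)%N by rewrite muln_gt0 L0.
rewrite -(leq_pmul2l LL) rE I1 I2 rE2 rE3; apply: leq_mul => //.
exact: pineq.
Qed.

Definition bl (l : nat) : 'I_mu.+1 := inord (l %/ L).
Definition rl (l : nat) : 'I_L := Ordinal (ltn_pmod l L0).

Lemma pos_cond (l l' : nat) : (l < l')%N -> (l' < mu.+1 * L)%N ->
  ((bl l < bl l')%N \/ (bl l = bl l' /\ rl l != rl l')).
Proof.
move=> ll lb.
have d' : (l' %/ L < mu.+1)%N by rewrite ltn_divLR // L0.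
have dd : (l %/ L <= l' %/ L)%N by apply: leq_div2r; exact: ltnW.
have d : (l %/ L < mu.+1)%N by exact: leq_ltn_trans dd d'.
have vb : (bl l : nat) = l %/ L by rewrite /bl inordK.
have vb' : (bl l' : nat) = l' %/ L by rewrite /bl inordK.
rewrite leq_eqVlt in dd; case/orP: dd => [/eqP e|lt]; last by left; rewrite vb vb'.
right; split; first by apply: ord_inj; rewrite vb vb'.
apply/negP => /eqP [em].
have : l = l' by rewrite (divn_eq l L) (divn_eq l' L) e em.
lia.
Qed.

Local Open Scope ring_scope.
Lemma tot_R (R : realType) :
  \sum_(o : 'I_mu * FT L mu) (pw s o.2)%:R = (totN%:R : R).
Proof.
rewrite /totN natr_sum; under eq_bigr do rewrite natr_sum; by rewrite pair_bigA.
Qed.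

Lemma cnt_R (R : realType) b b' r r' :
  \sum_(o : 'I_mu * FT L mu) (pw s o.2)%:R * ((memb o.1 o.2 b r && ~~ memb o.1 o.2 b' r') : nat)%:R
  = ((cntN b b' r r')%:R : R).
Proof.
rewrite /cntN natr_sum; under eq_bigr do rewrite natr_sum; rewrite pair_bigA /=.
by apply: eq_bigr => o _; rewrite natrM.
Qed.

Lemma keyR (R : realType) (l l' : nat) : (l < l')%N -> (l' < mu.+1 * L)%N ->
  ((s * (L - s))%:R / (L * L.-1)%:R : R) * \sum_(o : 'I_mu * FT L mu) (pw s o.2)%:R <=
  \sum_(o : 'I_mu * FT L mu) (pw s o.2)%:R * ((memb o.1 o.2 (bl l) (rl l) && ~~ memb o.1 o.2 (bl l') (rl l')) : nat)%:R.
Proof.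
move=> ll lb.
rewrite tot_R cnt_R mulrAC ler_pdivrMr; last by rewrite ltr0n muln_gt0 L0 /=; lia.
rewrite -!natrM ler_nat [X in (_ <= X)%N]mulnC; exact: key_nat (pos_cond ll lb).
Qed.

Lemma totN_gt0 : (0 < totN)%N.
Proof.
rewrite (tot_same ord0) !muln_gt0 bin_gt0 /=; apply/andP; split; first lia.
apply/andP; split; first lia.
by apply: prodn_gt0 => i; rewrite bin_gt0; lia.
Qed.
End Key.

Section RF.
Local Open Scope ring_scope.
Lemma real_final (R : realType) (tr hr nr : R) : 1 <= tr -> 32 * tr ^+ 3 <= nr -> nr <= 256 * tr ^+ 3 ->
  (8 * tr + 2) * (hr - 1) <= nr -> nr <= (8 * tr + 2) * hr -> 2 * tr ^+ 2 < hr ->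
  1 / 4 + 1 / (8 * nr `^ (2 / 3) - 4) <= (hr + tr) * (hr - tr) / (2 * hr * (2 * hr - 1)).
Proof.
move=> t1 h1 h2 h3 h4 h5.
have t3 : 0 <= tr ^+ 3 by apply: exprn_ge0; lra.
have n0 : 0 <= nr by lra.
set z := nr `^ (2 / 3).
have z0 : 0 <= z by apply: powR_ge0.
have z3 : z ^+ 3 = nr ^+ 2.
  rewrite /z -powR_mulrn // -powRrM.
  have -> : (2 / 3 * 3%:R : R) = 2%:R by rewrite -[3%:R]/(3 : R); field.
  by rewrite powR_mulrn.
have a0 : 0 < hr - 2 * tr ^+ 2 by lra.
have hpos : 1 < hr.
  have : 1 <= tr ^+ 2 by rewrite expr2; nra.
  lra.
set g := (hr ^+ 2 - tr ^+ 2) / (hr - 2 * tr ^+ 2).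
have g0 : 0 <= g.
  apply: divr_ge0; last lra.
  have tt : tr <= tr ^+ 2 by rewrite expr2; nra.
  have th : tr <= hr by lra.
  rewrite subr_ge0; apply: lerXn2r; rewrite ?nnegrE //; lra.
have mi := main_ineq t1 h1 h2 h3 h4.
have g3 : g ^+ 3 <= z ^+ 3.
  rewrite z3 /g exprMn exprVn ler_pdivrMr; last by apply: exprn_gt0.
  apply: le_trans mi.
  have -> : hr ^+ 6 = (hr ^+ 2) ^+ 3 by rewrite -exprM.
  have st : 0 <= tr ^+ 2 by apply: sqr_ge0.
  have tt : tr <= tr ^+ 2 by rewrite expr2; nra.
  have th2 : tr ^+ 2 <= hr ^+ 2 by apply: lerXn2r; rewrite ?nnegrE; lra.
  apply: lerXn2r; rewrite ?nnegrE; lra.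
have gz : g <= z.
  by move: g3; rewrite (ler_pXn2r (n:=3)) // ?nnegrE.
have e8 : 8 * g - 4 = 4 * hr * (2 * hr - 1) / (hr - 2 * tr ^+ 2).
  rewrite /g; field; lra.
have p8 : 0 < 8 * g - 4.
  rewrite e8; apply: divr_gt0 => //; apply: mulr_gt0; lra.
have : 1 / (8 * z - 4) <= 1 / (8 * g - 4).
  rewrite ler_pdivrMr; last lra.
  rewrite mulrC mulrA ler_pdivlMr // mul1r; lra.
rewrite e8 => H.
apply: le_trans (lerD (lexx (1/4)) H) _.
have E : 1 / 4 + 1 / (4 * hr * (2 * hr - 1) / (hr - 2 * tr ^+ 2)) = (hr + tr) * (hr - tr) / (2 * hr * (2 * hr - 1)).
  field; lra.
by rewrite E.
Qed.

End RF.

Lemma nstar_ge (k : nat) : (7 <= k)%N -> (32 <= n_star k)%N.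
Proof.
move=> k7; rewrite /n_star.
have m1 : (1 <= Nat.sqrt (k %/ 2))%N.
  have : (Nat.sqrt 1 <= Nat.sqrt (k %/ 2))%coq_nat by apply: Nat.sqrt_le_mono; lia.
  by move/ssrnat.leP.
rewrite big_ltn; last by lia.
lia.
Qed.

Lemma t_exists (nu : nat) : (32 <= nu)%N ->
  exists t, [/\ (1 <= t)%N, (32 * (t * t * t) <= nu)%N & (nu < 32 * ((t + 1) * (t + 1) * (t + 1)))%N].
Proof.
move=> n32.
have exP : exists t, (32 * (t * t * t) <= nu)%N by exists 1%N; lia.
have ubP : forall t, (32 * (t * t * t) <= nu)%N -> (t <= nu)%N by move=> t Ht; nia.
case: (ex_maxnP exP ubP) => t Pt maxt.
exists t; split => //.
- have := maxt 1%N ltac:(lia); lia.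
- rewrite ltnNge; apply/negP => H; have := maxt _ H; lia.
Qed.

Local Open Scope ring_scope.

Lemma z_pos (R : realType) (nr : R) : 1 <= nr -> 0 < 8 * nr `^ (2 / 3) - 4.
Proof.
move=> n1.
set z := nr `^ (2 / 3).
have z0 : 0 <= z by apply: powR_ge0.
have z3 : z ^+ 3 = nr ^+ 2.
  rewrite /z -powR_mulrn ?powR_ge0 // -powRrM.
  have -> : (2 / 3 * 3%:R : R) = 2%:R by rewrite -[3%:R]/(3 : R); field.
  by rewrite powR_mulrn //; lra.
have : 1 ^+ 3 <= z ^+ 3 by rewrite z3 expr1n; have := n1; nra.
rewrite (ler_pXn2r (n:=3)) // ?nnegrE //; lra.
Qed.

Unset Implicit Arguments.
Theorem mainTheorem14 (R : realType) (k : nat) : (7 <= k)%N ->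
  ((1 / 4 + 1 / (8 * (n_star k)%:R `^ (2 / 3) - 4) : R)%:E <= c_nu R (n_star k))%E.
Proof.
move=> k7.
have n32 := nstar_ge k7.
move: n32; set nu := n_star k => n32.
have [t [t1 ht1 ht2]] := t_exists n32.
pose h := (nu %/ (8 * t + 2) + 1)%N.
have hA : ((8 * t + 2) * (h - 1) <= nu)%N by rewrite /h; lia.
have hB : (nu < (8 * t + 2) * h)%N by rewrite /h; lia.
have h2 : (2 * (t * t) < h)%N by nia.
have th : (t <= h)%N by nia.
have n256 : (nu <= 256 * (t * t * t))%N by nia.
have h1 : (1 <= h)%N by lia.
pose c := (((h + t) * (2 * h - (h + t)))%:R / ((2 * h) * (2 * h).-1)%:R : R).
pose c0 := (1 / 4 + 1 / (8 * nu%:R `^ (2 / 3) - 4) : R).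
have e3 : forall m : nat, ((m * m * m)%N%:R : R) = m%:R ^+ 3 by move=> m; rewrite !natrM; ring.
have cmp : c0 <= c.
  have H := @real_final R t%:R h%:R nu%:R.
  have ec : (h%:R + t%:R) * (h%:R - t%:R) / (2 * h%:R * (2 * h%:R - 1)) = c.
    rewrite /c.
    have -> : (2 * h - (h + t) = h - t)%N by lia.
    have -> : ((2 * h).-1 = 2 * h - 1)%N by lia.
    rewrite !natrM natrD !natrB //; last by lia.
    by rewrite natrM.
  rewrite -ec; apply: H.
  - by rewrite ler1n.
  - by rewrite -e3 -[32]/(32%:R) -natrM ler_nat.
  - by rewrite -e3 -[256]/(256%:R) -natrM ler_nat.
  - have := hA; rewrite -(ler_nat R) natrM natrB // natrD natrM => H'; exact: H'.
  - have := ltnW hB; rewrite -(ler_nat R) natrM natrD natrM => H'; exact: H'.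
  - have := h2; rewrite -(ltr_nat R) !natrM => H'.
    by rewrite expr2.
have zp : 0 < 8 * nu%:R `^ (2 / 3) - 4 :> R by apply: z_pos; rewrite ler1n; lia.
rewrite /c_nu; apply: ereal_sup_ubound; exists c0 => //; split.
  rewrite /c0; apply: addr_ge0; first lra.
  by apply: divr_ge0; lra.
move=> n A w _ hw acy lp.
have total0 : 0 <= total_weight A w.
  by apply: sumr_ge0 => x _; apply: sumr_ge0 => y Axy; exact: hw.
apply: le_trans (ler_wpM2r total0 cmp) _.
apply: (@avg R n A w ('I_(4 * t) * FT (2 * h) (4 * t))%type
          (fun o => (pw (h + t) o.2)%:R)
          (fun o => [set v | memb o.1 o.2 (bl h t (lev A v)) (rl t1 th (lev A v))])).
- exact: hw.
- by move=> o; exact: ler0n.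
- by rewrite (tot_R h t R) ltr0n; exact: totN_gt0.
- move=> x y Axy.
  have lxy := lev_arc acy Axy.
  have ly : (lev A y < (4 * t).+1 * (2 * h))%N.
    apply: leq_trans (lev_bound acy y lp) _.
    have -> : ((4 * t).+1 * (2 * h) = (8 * t + 2) * h)%N by ring.
    exact: ltnW.
  have := keyR t1 th R lxy ly.
  congr (_ <= _); apply: eq_bigr => o _; by rewrite !inE.
Qed.
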